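(* Let $(G,M,I)$ be a finite formal context and, for each $k\ge0$, let $\mathcal F_k$ be the cosheaf on $D(G,M,I)$ with $\mathcal F_k(\sigma)=C_k(\Delta[\sigma'])$ and extension maps induced by the inclusions $\tau'\subseteq\sigma'$ for $\sigma\subseteq\tau$. The simplicial boundary maps $C_k(\Delta[\sigma'])\to C_{k-1}(\Delta[\sigma'])$ commute with the extension maps and hence induce maps $H_0(\mathcal F_k)\to H_0(\mathcal F_{k-1})$ on zeroth cellular cosheaf homology. The resulting chain complex $(H_0(\mathcal F_k))_{k\ge0}$ is isomorphic to the real simplicial chain complex $C^\Delta(D(M,G,I^T))$ of the dual Dowker complex.
   Context: A formal context is a triple $(G,M,I)$ with $I\subseteq G\times M$; for $A\subseteq G$, $A'=\{m: gIm\ \forall g\in A\}$, for $B\subseteq M$, $B'=\{g: gIm\ \forall m\in B\}$. The Dowker complex $D(G,M,I)$ is the abstract simplicial complex on $G$ whose simplices are the nonempty $\sigma\subseteq G$ with $\sigma'\ne\emptyset$; dually $D(M,G,I^T)$ is the abstract simplicial complex on $M$ whose simplices are the nonempty $S\subseteq M$ with $S'\neq\emptyset$. $C^\Delta$ and $C_k$ denote real (oriented) simplicial chains, with orientations from fixed linear orders on $G$ and $M$; $\Delta[S]$ is the full simplex on $S$. For a cosheaf $\mathcal F$ of real vector spaces on $D(G,M,I)$, cellular cosheaf homology is the homology of $C_j=\bigoplus_{\dim\tau=j}\mathcal F(\tau)$ with $\partial_j x=\sum_{i=0}^{j}(-1)^i\mathcal F(\tau_i\subseteq\tau)(x)$ for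 $x\in\mathcal F(\tau)$, $\tau=\{g_0<\dots<g_j\}$, $\tau_i=\tau\setminus\{g_i\}$; in particular $H_0(\mathcal F)=C_0/\partial_1(C_1)$. *)

(* Defs.v *)
From HB Require Import structures.
From mathcomp Require Import all_boot all_order all_algebra.
From mathcomp Require Import reals.
Set Implicit Arguments. Unset Strict Implicit. Unset Printing Implicit Defensive.
Import Order.TTheory GRing.Theory Num.Theory.
Local Open Scope ring_scope.

(* A finite formal context (G,M,I) with G = 'I_n, M = 'I_m (linearly ordered
   by the natural order of ordinals); I g x means g I x. *)

Definition intent (n m : nat) (I : 'I_n -> 'I_m -> bool) (A : {set 'I_n})
  : {set 'I_m} := [set x | [forall g in A, I g x]].
Definition extent (n m : nat) (I : 'I_n -> 'I_m -> bool) (B : {set 'I_m})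
  : {set 'I_n} := [set g | [forall x in B, I g x]].

(* Orientation sign (-1)^i where i is the position of x in the ordered
   simplex tau (x \in tau). *)
Definition osign (R : pzRingType) (p : nat) (tau : {set 'I_p}) (x : 'I_p) : R :=
  (-1) ^+ #|[set h in tau | (val h < val x)%N]|.

(* A vector of C_j(F_k) = ⊕_{dim sigma = j} C_k(Δ[sigma']) is encoded as a
   function on pairs (sigma, s), s a k-simplex of Δ[sigma'], i.e. the
   coefficient of the basis element e_sigma ⊗ s. *)
Definition coshChain (R : pzRingType) (n m : nat) (I : 'I_n -> 'I_m -> bool)
  (j k : nat) (f : {ffun {set 'I_n} * {set 'I_m} -> R}) : Prop :=
  forall p, f p != 0 ->
    [/\ #|p.1| = j.+1, intent I p.1 != set0,
        p.2 \subset intent I p.1 & #|p.2| = k.+1].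

(* Cellular cosheaf boundary C_j(F_k) -> C_{j-1}(F_k) (used for j = 1):
   d(e_tau ⊗ s) = sum_i (-1)^i e_{tau_i} ⊗ F(tau_i ⊆ tau)(s), where the
   extension map is induced by the inclusion tau' ⊆ tau_i', hence sends the
   simplex s to itself. *)
Definition coshBd (R : pzRingType) (n m : nat)
  (f : {ffun {set 'I_n} * {set 'I_m} -> R}) : {ffun {set 'I_n} * {set 'I_m} -> R} :=
  [ffun p => if p.1 != set0 then
     \sum_(g | g \notin p.1) osign R (g |: p.1) g * f (g |: p.1, p.2)
   else 0].

(* The map C_0(F_k) -> C_0(F_{k-1}) given on each summand C_k(Δ[sigma'])
   by the simplicial boundary (with C_{-1} = 0), in coordinates. *)
Definition fibreBd (R : pzRingType) (n m : nat)
  (f : {ffun {set 'I_n} * {set 'I_m} -> R}) : {ffun {set 'I_n} * {set 'I_m} -> R} :=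
  [ffun p => if p.2 != set0 then
     \sum_(x | x \notin p.2) osign R (x |: p.2) x * f (p.1, x |: p.2)
   else 0].

(* C_k(D(M,G,I^T)): functions on subsets S of M supported on k-simplices,
   i.e. #|S| = k+1 and S' nonempty. *)
Definition dualChain (R : pzRingType) (n m : nat) (I : 'I_n -> 'I_m -> bool)
  (k : nat) (h : {ffun {set 'I_m} -> R}) : Prop :=
  forall s, h s != 0 -> #|s| = k.+1 /\ extent I s != set0.

Definition simpBd (R : pzRingType) (m : nat) (h : {ffun {set 'I_m} -> R})
  : {ffun {set 'I_m} -> R} :=
  [ffun s => if s != set0 then
     \sum_(x | x \notin s) osign R (x |: s) x * h (x |: s)
   else 0].

(* Main.v *)
Require Import Defs.
From HB Require Import structures.
From mathcomp Require Import all_boot all_order all_algebra.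
From mathcomp Require Import reals lra.
Set Implicit Arguments. Unset Strict Implicit. Unset Printing Implicit Defensive.
Import Order.TTheory GRing.Theory Num.Theory.
Local Open Scope ring_scope.


Lemma sum_neq0 (T : finType) (R : zmodType) (P : pred T) (F : T -> R) :
  \sum_(i | P i) F i != 0 -> exists2 i, P i & F i != 0.
Proof.
move=> H; case: (boolP [exists i, P i && (F i != 0)]).
  by move=> /existsP [i /andP [Pi Fi]]; exists i.
move=> /existsPn Hn; move: H; rewrite big1 ?eqxx // => i Pi.
by move: (Hn i); rewrite Pi /= negbK => /eqP.
Qed.

Lemma intent1 n m (I : 'I_n -> 'I_m -> bool) g x : (x \in intent I [set g]) = I g x.
Proof.
rewrite inE; apply/forallP/idP => [H|H h]; first by move: (H g); rewrite inE eqxx.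
by apply/implyP; rewrite inE => /eqP ->.
Qed.

Lemma extentP n m (I : 'I_n -> 'I_m -> bool) g s :
  (g \in extent I s) = (s \subset intent I [set g]).
Proof.
rewrite inE; apply/forallP/subsetP => [H x xs|H x]; first by rewrite intent1; move: (H x); rewrite xs.
by apply/implyP => /H; rewrite intent1.
Qed.

Lemma sign_sq (R : comPzRingType) (e : nat) : ((-1) ^+ e : R) * (-1) ^+ e = 1.
Proof. by rewrite -exprMn mulrNN mulr1 expr1n. Qed.

Lemma osign_pair (R : comPzRingType) p (a b : 'I_p) : a != b ->
  osign R [set a; b] a * osign R [set a; b] b = -1.
Proof.
wlog ab : a b / (val a < val b)%N.
  move=> W nab; case: (ltngtP (val a) (val b)) => h; first exact: W.
    by rewrite setUC mulrC W // eq_sym.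
  by move: nab; rewrite -val_eqE /= h eqxx.
move=> _; rewrite /osign.
have -> : [set h in [set a; b] | (val h < val a)%N] = set0.
  apply/setP => h; rewrite !inE; apply/negbTE; apply/negP => /andP[/orP[] /eqP -> ].
    by rewrite ltnn.
  by rewrite ltnNge ltnW.
have -> : [set h in [set a; b] | (val h < val b)%N] = [set a].
  apply/setP => h; rewrite !inE; case: (eqVneq h a) => [->|]; first by rewrite ab.
  by case: (eqVneq h b) => [->|]; rewrite ?ltnn.
by rewrite cards0 cards1 expr0 expr1 mul1r.
Qed.


Definition phi0 (R : realType) (n m : nat) (f : {ffun {set 'I_n} * {set 'I_m} -> R}) : {ffun {set 'I_m} -> R} :=
  [ffun s => \sum_g f ([set g], s)].

Lemma phi_lin (R : realType) (n m : nat) a (f g : {ffun {set 'I_n} * {set 'I_m} -> R}) :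
  phi0 [ffun p => a * f p + g p] = [ffun s => a * phi0 f s + phi0 g s].
Proof.
apply/ffunP => s; rewrite !ffunE; under eq_bigr do rewrite ffunE.
by rewrite big_split /= mulr_sumr.
Qed.

Lemma phi_dual (R : realType) (n m : nat) (I : 'I_n -> 'I_m -> bool) k (f : {ffun {set 'I_n} * {set 'I_m} -> R}) : coshChain I 0 k f -> dualChain I k (phi0 f).
Proof.
move=> Hf s; rewrite ffunE => /sum_neq0 [g _ /Hf /= [_ _ h3 h4]]; split => //.
by apply/set0Pn; exists g; rewrite extentP.
Qed.

Lemma phi_comm (R : realType) (n m : nat) (f : {ffun {set 'I_n} * {set 'I_m} -> R}) : phi0 (fibreBd f) = simpBd (phi0 f).
Proof.
apply/ffunP => s; rewrite !ffunE.
under eq_bigr do rewrite ffunE /=.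
under [in RHS]eq_bigr do rewrite ffunE /=.
case: (s != set0).
  under [in RHS]eq_bigr do rewrite mulr_sumr.
  by rewrite exchange_big.
by rewrite big1.
Qed.

Lemma phi_surj (R : realType) (n m : nat) (I : 'I_n -> 'I_m -> bool) k (h : {ffun {set 'I_m} -> R}) : dualChain I k h -> exists f, coshChain I 0 k f /\ phi0 f = h.
Proof.
move=> Hh.
exists [ffun p => match [pick r in extent I p.2] with
   Some r => if p.1 == [set r] then h p.2 else 0 | None => 0 end].
split.
  move=> [A B]; rewrite ffunE /=; case: pickP => [r|_]; last by rewrite eqxx.
  rewrite extentP => rB; case: (eqVneq A [set r]) => [->|_]; last by rewrite eqxx.
  move=> /Hh [cB _]; split; rewrite ?cards1 //.
  apply/set0Pn; have : (0 < #|B|)%N by rewrite cB.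
  case/card_gt0P => x xB.
  by exists x; apply: (subsetP rB).
apply/ffunP => s; rewrite ffunE; under eq_bigr do rewrite ffunE /=.
case: pickP => [r _|H].
  rewrite (bigD1 r) //= eqxx big1 ?addr0 // => g gr.
  by case: eqP => // /set1_inj /eqP; rewrite (negbTE gr).
rewrite big1 //; apply/esym/eqP; apply: contraT => /Hh [_ /set0Pn [g]].
by rewrite H.
Qed.


Lemma set1_n0 (T : finType) (x : T) : ([set x] != set0) = true.
Proof. by apply/set0Pn; exists x; rewrite set11. Qed.

Lemma osign_swap (R : comPzRingType) p (a c : 'I_p) : a != c ->
  osign R [set a; c] a = - osign R [set a; c] c.
Proof.
move=> ac; have h := osign_pair R ac.
have s2 : osign R [set a; c] c * osign R [set a; c] c = 1 by apply: sign_sq.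
transitivity (osign R [set a; c] a * (osign R [set a; c] c * osign R [set a; c] c)).
  by rewrite s2 mulr1.
by rewrite mulrA h mulN1r.
Qed.

Lemma phi_bd0 (R : realType) n m (g : {ffun {set 'I_n} * {set 'I_m} -> R}) :
  phi0 (coshBd g) = 0.
Proof.
apply/ffunP => s; rewrite !ffunE.
under eq_bigr do rewrite ffunE /= set1_n0 /=.
set F := fun a c : 'I_n => osign R [set a; c] a * g ([set a; c], s).
have FN : forall a c, a != c -> F a c = - F c a.
  move=> a c ac; have E : [set a; c] = [set c; a] by rewrite setUC.
  by rewrite /F E (@osign_swap _ _ c a) 1?eq_sym // mulNr ?opprK.
set S := \sum_c _.
have SE : S = \sum_c \sum_a (if a != c then F a c else 0).
  by apply: eq_bigr => c _; rewrite big_mkcond; apply: eq_bigr => a _; rewrite in_set1.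
have : S = - S.
  rewrite {1}SE exchange_big /= SE -sumrN; apply: eq_bigr => a _.
  rewrite -sumrN; apply: eq_bigr => c _; rewrite eq_sym.
  by case: ifP => [ac|_]; rewrite ?oppr0 // FN // eq_sym.
by move=> h; lra.
Qed.


Lemma pair_eq (T : finType) (a c0 r c : T) : a != c0 -> c != r ->
  ([set a; c0] == [set r; c]) = ((a == r) && (c0 == c)) || ((a == c) && (c0 == r)).
Proof.
move=> ac0 cr; apply/eqP/idP => [E|].
  have Ha : a \in [set r; c] by rewrite -E !inE eqxx.
  have Hc : c0 \in [set r; c] by rewrite -E !inE eqxx orbT.
  case/set2P: Ha => ?; case/set2P: Hc => ?; subst; rewrite ?eqxx ?orbT //.
    by move: ac0; rewrite eqxx.
  by move: ac0; rewrite eqxx.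
by case/orP => /andP [/eqP -> /eqP ->] //; rewrite setUC.
Qed.

Lemma phi_ker (R : realType) n m (I : 'I_n -> 'I_m -> bool) k
  (f : {ffun {set 'I_n} * {set 'I_m} -> R}) :
  coshChain I 0 k f -> phi0 f = 0 -> exists g, coshChain I 1 k g /\ f = coshBd g.
Proof.
move=> Hf H0.
pose g : {ffun {set 'I_n} * {set 'I_m} -> R} := [ffun p => match [pick r in extent I p.2] with
   Some r => \sum_(c | (c != r) && (p.1 == [set r; c])) osign R p.1 r * f ([set c], p.2)
 | None => 0 end].
exists g; split.
  move=> [A B]; rewrite ffunE /=; case: pickP => [r rE|_]; last by rewrite eqxx.
  move=> /sum_neq0 [c /andP[cr /eqP ->]]; rewrite mulf_eq0 negb_or.
  move=> /andP[_ /Hf /= [_ _ h3 h4]].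
  have sub : B \subset intent I [set r; c].
    apply/subsetP => x xB; rewrite inE; apply/forallP => h; apply/implyP => /set2P [] ->.
      by rewrite extentP in rE; have := subsetP rE x xB; rewrite intent1.
    by have := subsetP h3 x xB; rewrite intent1.
  split => //; first by rewrite cards2 eq_sym cr.
  apply/set0Pn; have : (0 < #|B|)%N by rewrite h4.
  by case/card_gt0P => x xB; exists x; apply: (subsetP sub).
apply/ffunP => -[A B]; rewrite ffunE /=.
case: (boolP (#|A| == 1)%N) => [/cards1P [c0 ->]|A1].
  rewrite set1_n0; under eq_bigr do rewrite ffunE /=.
  case: pickP => [r rE | Hn]; last first.
    rewrite big1 => [|a _]; last by rewrite mulr0.
    apply/eqP; apply: contraT => /Hf [_ _ h3 _].
    by have := Hn c0; rewrite /= extentP h3.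
  have sumz : \sum_c f ([set c], B) = 0.
    by move/ffunP: H0 => /(_ B); rewrite !ffunE.
  case: (eqVneq c0 r) => [->|c0r].
    transitivity (\sum_(a | a \notin [set r]) - f ([set a], B)).
      move: sumz; rewrite (bigD1 r) //= => /eqP; rewrite addr_eq0 => /eqP ->.
      rewrite -sumrN; apply: eq_bigl => a; by rewrite in_set1.
    apply: eq_bigr => a; rewrite in_set1 => ar.
    rewrite (big_pred1 a); last first.
      move=> c /=; case: (eqVneq c r) => [->|cr] /=; first by rewrite eq_sym (negbTE ar).
      by rewrite pair_eq // eqxx !andbT (negbTE ar) eq_sym.
    by rewrite mulrA osign_pair // mulN1r.
  rewrite (bigD1 r) /=; last by rewrite in_set1 eq_sym.
  rewrite [X in _ + X]big1 ?addr0.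
    rewrite (big_pred1 c0); last first.
      move=> c /=; case: (eqVneq c r) => [->|cr] /=; first by rewrite eq_sym (negbTE c0r).
      rewrite pair_eq; [|by rewrite eq_sym|by []].
      by rewrite eqxx (negbTE c0r) andbF orbF /= eq_sym.
    by rewrite mulrA /osign sign_sq mul1r.
  move=> a /andP [ac0 ar]; rewrite in_set1 in ac0.
  rewrite big_pred0 ?mulr0 // => c; case: (eqVneq c r) => [->|cr] //=.
  by rewrite pair_eq // (negbTE ar) (negbTE c0r) /= !andbF.
have -> : f (A, B) = 0.
  by apply/eqP; apply: contraT => /Hf [/eqP]; rewrite (negbTE A1).
case: ifP => // An0; rewrite big1 // => a aA; rewrite ffunE /=.
case: pickP => [r _|_]; last by rewrite mulr0.
rewrite big1 ?mulr0 // => c /andP [cr /eqP E]; exfalso.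
have := cards2 r c; rewrite -E cardsU1 aA (eq_sym r) cr add1n => -[] A1'.
by move: A1; rewrite A1'.
Qed.


Lemma fibre_chain (R : realType) n m (I : 'I_n -> 'I_m -> bool) j k
  (f : {ffun {set 'I_n} * {set 'I_m} -> R}) :
  coshChain I j k.+1 f -> coshChain I j k (fibreBd f).
Proof.
move=> Hf [A B]; rewrite ffunE /=; case: ifP => [_|]; last by rewrite eqxx.
move=> /sum_neq0 [x xB].
rewrite mulf_eq0 negb_or => /andP [_ /Hf /= [h1 h2 h3 h4]]; split => //.
  by apply: subset_trans h3; apply: subsetUr.
by move: h4; rewrite cardsU1 xB add1n => -[].
Qed.

Lemma comm_bd (R : realType) n m (f : {ffun {set 'I_n} * {set 'I_m} -> R}) :
  fibreBd (coshBd f) = coshBd (fibreBd f).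
Proof.
apply/ffunP => -[A B]; rewrite !ffunE /=.
under eq_bigr do rewrite ffunE /=.
under [in RHS]eq_bigr do rewrite ffunE /=.
case: (A != set0); case: (B != set0) => //.
- under eq_bigr do rewrite mulr_sumr.
  under [in RHS]eq_bigr do rewrite mulr_sumr.
  rewrite exchange_big /=; apply: eq_bigr => g _; apply: eq_bigr => x _.
  by rewrite mulrCA.
- by rewrite big1 // => g _; rewrite mulr0.
- by rewrite big1 // => g _; rewrite mulr0.
Qed.

Unset Implicit Arguments.
Theorem mainTheorem6 (R : realType) (n m : nat) (I : 'I_n -> 'I_m -> bool) :
  (forall k (f : {ffun {set 'I_n} * {set 'I_m} -> R}),
      coshChain I 0 k.+1 f -> coshChain I 0 k (fibreBd f)) /\
  (forall k (f : {ffun {set 'I_n} * {set 'I_m} -> R}),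
      coshChain I 1 k.+1 f ->
      coshChain I 1 k (fibreBd f) /\ fibreBd (coshBd f) = coshBd (fibreBd f)) /\
  exists phi : nat -> {ffun {set 'I_n} * {set 'I_m} -> R} -> {ffun {set 'I_m} -> R},
    forall k : nat,
    [/\ (forall (a : R) (f g : {ffun {set 'I_n} * {set 'I_m} -> R}), coshChain I 0 k f -> coshChain I 0 k g ->
           phi k [ffun p => a * f p + g p] = [ffun s => a * phi k f s + phi k g s]),
        (forall f, coshChain I 0 k f -> dualChain I k (phi k f)),
        (forall h, dualChain I k h -> exists f, coshChain I 0 k f /\ phi k f = h),
        (forall f, coshChain I 0 k f ->
           (phi k f = 0 <-> exists g, coshChain I 1 k g /\ f = coshBd g)) &
        (forall f, coshChain I 0 k.+1 f -> phi k (fibreBd f) = simpBd (phi k.+1 f))].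
Proof.
split; first by move=> k f; apply: fibre_chain.
split; first by move=> k f Hf; split; [apply: fibre_chain | apply: comm_bd].
exists (fun _ => @phi0 R n m) => k; split.
- by move=> a f g _ _; apply: phi_lin.
- by move=> f; apply: phi_dual.
- by move=> h; apply: phi_surj.
- move=> f Hf; split; first exact: phi_ker.
  by case=> g [_ ->]; apply: phi_bd0.
- by move=> f _; apply: phi_comm.
Qed.
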